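(* (1) If $\mathrm{NF}_{\mathrm{fin}}(G_0,G_1,G_2,G_3)$ holds and $\mathbf{x}$ is an amalgamation try with $G_{\mathbf{x},0} = G_0$, $G_1 \subseteq G_{\mathbf{x},1}$, $G_2 \subseteq G_{\mathbf{x},2}$, then there is at most one homomorphism $\mathbf{f} : G_3 \to G_{\mathbf{x}}$ with $\mathbf{f}\restriction G_\ell = \mathbf{j}_{\mathbf{x},\ell}\restriction G_\ell$ for $\ell = 1,2$. (2) If $\mathrm{NF}_{\mathrm{fin}}(G_0,G_1,G_2,G_3)$ then $G_1 \cap G_2 = G_0$. (3) If $G_0 \subseteq G_\ell$ are finite groups for $\ell = 1,2$, then there are groups $H_0,H_1,H_2,H_3$ and maps $f_0,f_1,f_2$ such that $\mathrm{NF}_{\mathrm{fin}}(H_0,H_1,H_2,H_3)$, $f_\ell$ is an isomorphism from $G_\ell$ onto $H_\ell$ for $\ell = 0,1,2$, and $f_0 \subseteq f_1$, $f_0 \subseteq f_2$.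
   Context: A group is locally finite if every finitely generated subgroup is finite. An amalgamation try is $\mathbf{x} = (G_{\mathbf{x},0},G_{\mathbf{x},1},G_{\mathbf{x},2},\mathbf{I}_{\mathbf{x},1},\mathbf{I}_{\mathbf{x},2})$ where $G_{\mathbf{x},1},G_{\mathbf{x},2}$ are locally finite groups with common subgroup $G_{\mathbf{x},0}$, $\mathbf{I}_{\mathbf{x},\ell}$ is a set of representatives (without repetition) of the left cosets of $G_{\mathbf{x},0}$ in $G_{\mathbf{x},\ell}$, and $e \in \mathbf{I}_{\mathbf{x},1}\cap\mathbf{I}_{\mathbf{x},2}$. With $\mathcal{U}_{\mathbf{x}} = \{(g_0,g_1,g_2): g_0 \in G_{\mathbf{x},0}, g_\ell \in \mathbf{I}_{\mathbf{x},\ell}\}$, for $g \in G_{\mathbf{x},1}$ the permutation $\mathbf{j}_{\mathbf{x},1}(g)$ maps $(g_0,g_1,g_2)$ to $(g_0',g_1',g_2)$ where $(g_1',g_0') \in \mathbf{I}_{\mathbf{x},1}\times G_{\mathbf{x},0}$ is unique with $g_1'g_0' = g_1g_0g$; symmetrically $\mathbf{j}_{\mathbf{x},2}(g)$ for $g \in G_{\mathbf{x},2}$ maps $(g_0,g_1,g_2)$ to $(g_0',g_1,g_2')$ with $g_2'g_0' = g_2g_0g$. Permutations act on the right ($f_1f_2$ is $u \mapsto f_2(f_1(u))$) and $G_{\mathbf{x}}$ is the permutation group generated by $\mathbf{j}_{\mathbf{x},1}(G_{\mathbf{x},1}) \cup \mathbf{j}_{\mathbf{x},2}(G_{\mathbf{x},2})$.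 $\mathrm{NF}_{\mathrm{fin}}(G_0,G_1,G_2,G_3)$ means: $G_0, G_1, G_2$ are finite groups, $G_3$ is a locally finite group, $G_0 \subseteq G_\ell \subseteq G_3$ for $\ell=1,2$; $G_3$ is generated by $G_1 \cup G_2$; for every amalgamation try $\mathbf{x}$ with $G_{\mathbf{x},0} = G_0$, $G_1 \subseteq G_{\mathbf{x},1}$, $G_2 \subseteq G_{\mathbf{x},2}$ there is a homomorphism $\mathbf{f}: G_3 \to G_{\mathbf{x}}$ with $\mathbf{f}\restriction G_\ell = \mathbf{j}_{\mathbf{x},\ell}\restriction G_\ell$ for $\ell = 1,2$; and for every $a \in G_3\setminus\{e\}$ there are such $\mathbf{x},\mathbf{f}$ with $\mathbf{f}(a) \ne e$. *)

(* Defs.v *)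
From Stdlib Require Import List ClassicalEpsilon.
Set Implicit Arguments.
Unset Strict Implicit.

Record group := Group {
  gcar :> Type;
  gmul : gcar -> gcar -> gcar;
  gone : gcar;
  ginv : gcar -> gcar;
  gmulA : forall x y z, gmul x (gmul y z) = gmul (gmul x y) z;
  gmul1l : forall x, gmul gone x = x;
  gmulVl : forall x, gmul (ginv x) x = gone }.

Arguments gmul {g}.
Arguments gone {g}.
Arguments ginv {g}.

Inductive generated (G : group) (A : G -> Prop) : G -> Prop :=
| gen_base x : A x -> generated A x
| gen_one : generated A gone
| gen_mul x y : generated A x -> generated A y -> generated A (gmul x y)
| gen_inv x : generated A x -> generated A (ginv x).

Definition finite_set (T : Type) (A : T -> Prop) : Prop :=
  exists l : list T, forall x, A x -> In x l.

Definition is_subgroup (G : group) (A : G -> Prop) : Prop :=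
  A gone /\ (forall x y, A x -> A y -> A (gmul x y)) /\
  (forall x, A x -> A (ginv x)).

Definition locally_finite (G : group) : Prop :=
  forall l : list G, finite_set (generated (fun x => In x l)).

Definition finite_group (G : group) : Prop := finite_set (fun _ : G => True).

Definition hom_on (G H : group) (A : G -> Prop) (f : G -> H) : Prop :=
  forall x y, A x -> A y -> f (gmul x y) = gmul (f x) (f y).

Definition inj_on (G H : Type) (A : G -> Prop) (f : G -> H) : Prop :=
  forall x y, A x -> A y -> f x = f y -> x = y.

Definition group_hom (G H : group) (f : G -> H) : Prop :=
  forall x y, f (gmul x y) = gmul (f x) (f y).

Definition iso_onto (G H : group) (f : G -> H) (A : H -> Prop) : Prop :=
  group_hom f /\ (forall x y, f x = f y -> x = y) /\
  (forall x, A (f x)) /\ (forall y, A y -> exists x, f x = y).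

Definition coset_reps (X : group) (K I : X -> Prop) : Prop :=
  forall y : X, exists i, (I i /\ exists k, K k /\ y = gmul i k) /\
    forall i', I i' -> (exists k, K k /\ y = gmul i' k) -> i' = i.

(** The inclusions
    G_l ⊆ G_{x,l} are given by embeddings te1, te2 (restricted to G1, G2);
    the common subgroup G_{x,0} = G0 sits in X1 as te1(G0) and in X2 as
    te2(G0). *)
Record try (G3 : group) := Try {
  tX1 : group;
  tX2 : group;
  te1 : G3 -> tX1;
  te2 : G3 -> tX2;
  tI1 : tX1 -> Prop;
  tI2 : tX2 -> Prop }.

Arguments tX1 {G3} t.
Arguments tX2 {G3} t.
Arguments te1 {G3} t _.
Arguments te2 {G3} t _.
Arguments tI1 {G3} t _.
Arguments tI2 {G3} t _.

Definition is_try (G3 : group) (G0 G1 G2 : G3 -> Prop) (x : try G3) : Prop :=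
  locally_finite (tX1 x) /\ locally_finite (tX2 x) /\
  hom_on G1 (te1 x) /\ inj_on G1 (te1 x) /\
  hom_on G2 (te2 x) /\ inj_on G2 (te2 x) /\
  coset_reps (fun y => exists g0, G0 g0 /\ y = te1 x g0) (tI1 x) /\
  coset_reps (fun y => exists g0, G0 g0 /\ y = te2 x g0) (tI2 x) /\
  tI1 x gone /\ tI2 x gone.

Arguments is_try {G3} G0 G1 G2 x.

(** Carrier type containing U_x = { (g0,g1,g2) } ; u = ((g0,g1),g2). *)
Definition tU (G3 : group) (x : try G3) : Type := (G3 * tX1 x * tX2 x)%type.

Arguments tU {G3} x.

Definition inU (G3 : group) (G0 : G3 -> Prop) (x : try G3) (u : tU x) : Prop :=
  G0 (fst (fst u)) /\ tI1 x (snd (fst u)) /\ tI2 x (snd u).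

Arguments inU {G3} G0 x u.

Definition j1 (G3 : group) (G0 : G3 -> Prop) (x : try G3) (g : tX1 x)
  (u : tU x) : tU x :=
  epsilon (inhabits u) (fun v : tU x =>
    (snd v) = (snd u) /\ G0 (fst (fst v)) /\ tI1 x (snd (fst v)) /\
    gmul (snd (fst v)) (te1 x (fst (fst v))) = gmul (gmul (snd (fst u)) (te1 x (fst (fst u)))) g).

Arguments j1 {G3} G0 x g u.

Definition j2 (G3 : group) (G0 : G3 -> Prop) (x : try G3) (g : tX2 x)
  (u : tU x) : tU x :=
  epsilon (inhabits u) (fun v : tU x =>
    (snd (fst v)) = (snd (fst u)) /\ G0 (fst (fst v)) /\ tI2 x (snd v) /\
    gmul (snd v) (te2 x (fst (fst v))) = gmul (gmul (snd u) (te2 x (fst (fst u)))) g).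

Arguments j2 {G3} G0 x g u.

(** G_x: the permutation group of U_x generated by the j's.  Permutations
    are identified by their restriction to U_x; composition acts on the
    right (p q = u |-> q (p u)). *)
Inductive perm_gen (G3 : group) (G0 : G3 -> Prop) (x : try G3)
  : (tU x -> tU x) -> Prop :=
| pg_j1 g : @perm_gen G3 G0 x (j1 G0 x g)
| pg_j2 g : @perm_gen G3 G0 x (j2 G0 x g)
| pg_id : @perm_gen G3 G0 x (fun u => u)
| pg_comp p q : @perm_gen G3 G0 x p -> @perm_gen G3 G0 x q ->
    @perm_gen G3 G0 x (fun u => q (p u))
| pg_inv p q : @perm_gen G3 G0 x p ->
    (forall u, inU G0 x u -> inU G0 x (q u) /\ q (p u) = u /\ p (q u) = u) ->
    @perm_gen G3 G0 x q
| pg_ext p q : @perm_gen G3 G0 x p -> (forall u, inU G0 x u -> q u = p u) ->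
    @perm_gen G3 G0 x q.

Arguments perm_gen {G3} G0 x _.

Definition amalg_hom (G3 : group) (G0 G1 G2 : G3 -> Prop) (x : try G3)
  (f : G3 -> tU x -> tU x) : Prop :=
  (forall a, perm_gen G0 x (f a)) /\
  (forall a b u, inU G0 x u -> f (gmul a b) u = f b (f a u)) /\
  (forall a u, G1 a -> inU G0 x u -> f a u = j1 G0 x (te1 x a) u) /\
  (forall a u, G2 a -> inU G0 x u -> f a u = j2 G0 x (te2 x a) u).

Arguments amalg_hom {G3} G0 G1 G2 x f.

Definition NF_fin (G3 : group) (G0 G1 G2 : G3 -> Prop) : Prop :=
  is_subgroup G0 /\ is_subgroup G1 /\ is_subgroup G2 /\
  finite_set G0 /\ finite_set G1 /\ finite_set G2 /\
  locally_finite G3 /\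
  (forall a, G0 a -> G1 a) /\ (forall a, G0 a -> G2 a) /\
  (forall a, generated (fun y => G1 y \/ G2 y) a) /\
  (forall x : try G3, is_try G0 G1 G2 x ->
     exists f, amalg_hom G0 G1 G2 x f) /\
  (forall a : G3, a <> gone ->
     exists x : try G3, is_try G0 G1 G2 x /\
       exists f, amalg_hom G0 G1 G2 x f /\
         exists u, inU G0 x u /\ f a u <> u).

(* Main.v *)
Require Import Defs.
From Stdlib Require Import List ClassicalEpsilon FunctionalExtensionality PropExtensionality ProofIrrelevance Classical.
Import ListNotations.
Set Implicit Arguments.
Unset Strict Implicit.

Local Infix "**" := gmul (at level 40, left associativity).

Section GL.
Variable G : group.
Implicit Types x y z : G.
Lemma mA x y z : x ** (y ** z) = x ** y ** z. Proof. apply gmulA. Qed.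
Lemma m1l x : gone ** x = x. Proof. apply gmul1l. Qed.
Lemma mVl x : ginv x ** x = gone. Proof. apply gmulVl. Qed.
Lemma canl z x y : z ** x = z ** y -> x = y.
Proof. intro H. rewrite <- (m1l x), <- (m1l y), <- (mVl z), <- !mA, H. reflexivity. Qed.
Lemma idem1 y : y ** y = y -> y = gone.
Proof. intro H. apply (f_equal (gmul (ginv y))) in H. rewrite mA, mVl, m1l in H. exact H. Qed.
Lemma mVr x : x ** ginv x = gone.
Proof. apply idem1. rewrite mA, <- (mA x (ginv x) x), mVl.
  rewrite <- (mA x gone), m1l. reflexivity. Qed.
Lemma m1r x : x ** gone = x.
Proof. rewrite <- (mVl x), mA, mVr, m1l. reflexivity. Qed.
Lemma canr z x y : x ** z = y ** z -> x = y.
Proof. intro H. rewrite <- (m1r x), <- (m1r y), <- (mVr z), !mA, H. reflexivity. Qed.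
Lemma invM x y : ginv (x ** y) = ginv y ** ginv x.
Proof. apply (@canl (x ** y)). rewrite mVr, mA, <- (mA x y), mVr, m1r, mVr. reflexivity. Qed.
Lemma invK x : ginv (ginv x) = x.
Proof. apply (@canl (ginv x)). rewrite mVr, mVl. reflexivity. Qed.
Lemma inv1 : ginv (gone : G) = gone.
Proof. rewrite <- (m1l (ginv gone)). apply mVr. Qed.
Lemma solve_l x y z : x ** y = z -> x = z ** ginv y.
Proof. intro H. rewrite <- H, <- mA, mVr, m1r. reflexivity. Qed.
Lemma solve_r x y z : x ** y = z -> y = ginv x ** z.
Proof. intro H. rewrite <- H, mA, mVl, m1l. reflexivity. Qed.
End GL.

Lemma hom1 (G H : group) (A : G -> Prop) (f : G -> H) :
  hom_on A f -> A gone -> f gone = gone.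
Proof. intros Hf H1. apply idem1. rewrite <- Hf by exact H1. rewrite m1l. reflexivity. Qed.

Lemma homV (G H : group) (A : G -> Prop) (f : G -> H) :
  hom_on A f -> A gone -> forall x, A x -> A (ginv x) -> f (ginv x) = ginv (f x).
Proof. intros Hf H1 x Ax Ai. apply (@canl _ (f x)). rewrite <- Hf by assumption.
  rewrite mVr, mVr. apply (hom1 Hf H1). Qed.

Lemma ghom_on (G H : group) (f : G -> H) A : group_hom f -> hom_on A f.
Proof. intros Hf x y _ _. apply Hf. Qed.
Section J.
Variable G3 : group.
Variable G0p : G3 -> Prop.
Variable x : try G3.
Definition K1 : tX1 x -> Prop := fun y => exists g0, G0p g0 /\ y = te1 x g0.
Definition K2 : tX2 x -> Prop := fun y => exists g0, G0p g0 /\ y = te2 x g0.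
Hypothesis HC1 : coset_reps K1 (tI1 x).
Hypothesis HC2 : coset_reps K2 (tI2 x).
Hypothesis HI1 : inj_on G0p (te1 x).
Hypothesis HI2 : inj_on G0p (te2 x).

Lemma j1_spec g (u : tU x) : inU G0p x u ->
  snd (j1 G0p x g u) = snd u /\ G0p (fst (fst (j1 G0p x g u))) /\
  tI1 x (snd (fst (j1 G0p x g u))) /\
  snd (fst (j1 G0p x g u)) ** te1 x (fst (fst (j1 G0p x g u))) =
    snd (fst u) ** te1 x (fst (fst u)) ** g.
Proof.
  intros Hu. unfold j1. apply epsilon_spec.
  destruct (HC1 (snd (fst u) ** te1 x (fst (fst u)) ** g)) as [i [[Ii [k [[g0 [Hg0 ->]] Hy]]] _]].
  exists (g0, i, snd u). simpl. auto.
Qed.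

Lemma j2_spec g (u : tU x) : inU G0p x u ->
  snd (fst (j2 G0p x g u)) = snd (fst u) /\ G0p (fst (fst (j2 G0p x g u))) /\
  tI2 x (snd (j2 G0p x g u)) /\
  snd (j2 G0p x g u) ** te2 x (fst (fst (j2 G0p x g u))) =
    snd u ** te2 x (fst (fst u)) ** g.
Proof.
  intros Hu. unfold j2. apply epsilon_spec.
  destruct (HC2 (snd u ** te2 x (fst (fst u)) ** g)) as [i [[Ii [k [[g0 [Hg0 ->]] Hy]]] _]].
  exists (g0, snd (fst u), i). simpl. auto.
Qed.

Lemma j1_in g u : inU G0p x u -> inU G0p x (j1 G0p x g u).
Proof. intros Hu. destruct (j1_spec g Hu) as [E [A [B _]]]. unfold inU in *.
  rewrite E. tauto. Qed.

Lemma j2_in g u : inU G0p x u -> inU G0p x (j2 G0p x g u).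
Proof. intros Hu. destruct (j2_spec g Hu) as [E [A [B _]]]. unfold inU in *.
  rewrite E. tauto. Qed.

Lemma j1_char g (u v : tU x) : inU G0p x u -> inU G0p x v -> snd v = snd u ->
  snd (fst v) ** te1 x (fst (fst v)) = snd (fst u) ** te1 x (fst (fst u)) ** g ->
  j1 G0p x g u = v.
Proof.
  intros Hu Hv E1 E2. destruct (j1_spec g Hu) as [F1 [F2 [F3 F4]]].
  set (w := j1 G0p x g u) in *. clearbody w.
  destruct (HC1 (snd (fst u) ** te1 x (fst (fst u)) ** g)) as [i [_ Huniq]].
  destruct Hv as [V1 [V2 V3]].
  assert (Ew : snd (fst w) = i) by (apply Huniq; [exact F3| exists (te1 x (fst (fst w))); split; [exists (fst (fst w)); auto| auto]]).
  assert (Ev : snd (fst v) = i) by (apply Huniq; [exact V2| exists (te1 x (fst (fst v))); split; [exists (fst (fst v)); auto| auto]]).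
  assert (E3 : te1 x (fst (fst w)) = te1 x (fst (fst v))).
  { apply (@canl _ i). rewrite <- Ew at 1. rewrite F4, <- E2, Ev. reflexivity. }
  apply HI1 in E3; auto.
  destruct w as [[w0 w1] w2], v as [[v0 v1] v2]. simpl in *. subst. reflexivity.
Qed.

Lemma j2_char g (u v : tU x) : inU G0p x u -> inU G0p x v -> snd (fst v) = snd (fst u) ->
  snd v ** te2 x (fst (fst v)) = snd u ** te2 x (fst (fst u)) ** g ->
  j2 G0p x g u = v.
Proof.
  intros Hu Hv E1 E2. destruct (j2_spec g Hu) as [F1 [F2 [F3 F4]]].
  set (w := j2 G0p x g u) in *. clearbody w.
  destruct (HC2 (snd u ** te2 x (fst (fst u)) ** g)) as [i [_ Huniq]].
  destruct Hv as [V1 [V2 V3]].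
  assert (Ew : snd w = i) by (apply Huniq; [exact F3| exists (te2 x (fst (fst w))); split; [exists (fst (fst w)); auto| auto]]).
  assert (Ev : snd v = i) by (apply Huniq; [exact V3| exists (te2 x (fst (fst v))); split; [exists (fst (fst v)); auto| auto]]).
  assert (E3 : te2 x (fst (fst w)) = te2 x (fst (fst v))).
  { apply (@canl _ i). rewrite <- Ew at 1. rewrite F4, <- E2, Ev. reflexivity. }
  apply HI2 in E3; auto.
  destruct w as [[w0 w1] w2], v as [[v0 v1] v2]. simpl in *. subst. reflexivity.
Qed.
End J.
Arguments K1 {G3} G0p x _.
Arguments K2 {G3} G0p x _.
Lemma perm_gen_in (G3 : group) (G0p : G3 -> Prop) (x : try G3) :
  coset_reps (K1 G0p x) (tI1 x) -> coset_reps (K2 G0p x) (tI2 x) ->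
  forall p, perm_gen G0p x p -> forall u, inU G0p x u -> inU G0p x (p u).
Proof.
  intros H1 H2 p Hp. induction Hp; intros u Hu.
  - apply j1_in; auto.
  - apply j2_in; auto.
  - exact Hu.
  - auto.
  - apply H; auto.
  - rewrite H; auto.
Qed.

Section CR.
Variable X : group.
Variable K : X -> Prop.
Hypothesis K1' : K gone.
Hypothesis KM : forall a b, K a -> K b -> K (a ** b).
Hypothesis KV : forall a, K a -> K (ginv a).
Definition crel (y z : X) := exists k, K k /\ y = z ** k.
Lemma crel_refl y : crel y y. Proof. exists gone. split; auto. rewrite m1r; auto. Qed.
Lemma crel_sym y z : crel y z -> crel z y.
Proof. intros [k [Hk ->]]. exists (ginv k). split; auto. rewrite <- mA, mVr, m1r. auto. Qed.
Lemma crel_trans y z w : crel y z -> crel z w -> crel y w.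
Proof. intros [k [Hk ->]] [k' [Hk' ->]]. exists (k' ** k). split; auto. symmetry; apply mA. Qed.
Definition crep (y : X) : X :=
  if excluded_middle_informative (crel y gone) then gone
  else epsilon (inhabits (gone : X)) (fun z => crel y z).
Lemma crep_rel y : crel y (crep y).
Proof. unfold crep. destruct excluded_middle_informative; auto.
  apply epsilon_spec. exists y. apply crel_refl. Qed.
Lemma crep_eq y y' : crel y y' -> crep y = crep y'.
Proof. intros H. unfold crep.
  destruct (excluded_middle_informative (crel y gone)) as [a|a];
  destruct (excluded_middle_informative (crel y' gone)) as [b|b]; auto.
  - exfalso. apply b. eapply crel_trans; [apply crel_sym; exact H| exact a].
  - exfalso. apply a. eapply crel_trans; eauto.
  - f_equal. apply functional_extensionality. intros z. apply propositional_extensionality.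
    split; intros; eauto using crel_trans, crel_sym.
Qed.
Lemma coset_reps_exist : exists I, coset_reps K I /\ I gone.
Proof.
  exists (fun i => i = crep i). split.
  - intros y. exists (crep y). split.
    + split.
      * symmetry. apply crep_eq. apply crel_sym. apply crep_rel.
      * apply crep_rel.
    + intros i' Ei' Hi'. rewrite Ei'. apply crep_eq. apply crel_sym. exact Hi'.
  - unfold crep. destruct excluded_middle_informative as [a|a]; auto.
    exfalso. apply a. apply crel_refl.
Qed.
End CR.
Lemma part1 (G3 : group) (G0 G1 G2 : G3 -> Prop) :
     NF_fin G0 G1 G2 ->
     forall x : try G3, is_try G0 G1 G2 x ->
     forall f f' : G3 -> tU x -> tU x,
       amalg_hom G0 G1 G2 x f -> amalg_hom G0 G1 G2 x f' ->
       forall a u, inU G0 x u -> f a u = f' a u.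
Proof.
  intros HN x Hx f f' Hf Hf' a.
  destruct HN as [S0 [S1 [S2 [_ [_ [_ [_ [I01 [I02 [Gen _]]]]]]]]]].
  destruct Hx as [_ [_ [Hh1 [Hi1 [Hh2 [Hi2 [C1 [C2 [O1 O2]]]]]]]]].
  assert (HC1 : coset_reps (K1 G0 x) (tI1 x)) by exact C1.
  assert (HC2 : coset_reps (K2 G0 x) (tI2 x)) by exact C2.
  assert (HI1 : inj_on G0 (te1 x)) by (intros p q Hp Hq; apply Hi1; auto).
  destruct Hf as [Pf [Mf [F1 F2]]]. destruct Hf' as [Pf' [Mf' [F1' F2']]].
  assert (Inf : forall b u, inU G0 x u -> inU G0 x (f b u)) by (intros; eapply perm_gen_in; eauto).
  assert (Inf' : forall b u, inU G0 x u -> inU G0 x (f' b u)) by (intros; eapply perm_gen_in; eauto).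
  assert (G1one : G1 gone) by apply S1.
  assert (E1 : forall v, inU G0 x v -> f gone v = v).
  { intros v Hv. rewrite F1 by auto. rewrite (hom1 Hh1 G1one).
    apply (j1_char HC1 HI1); auto. rewrite m1r. reflexivity. }
  specialize (Gen a). induction Gen as [b [Hb|Hb]| |b c Hb IHb Hc IHc|b Hb IHb]; intros u Hu.
  - rewrite F1, F1'; auto.
  - rewrite F2, F2'; auto.
  - rewrite F1, F1'; auto.
  - rewrite Mf, Mf' by auto. rewrite IHb by auto. apply IHc. auto.
  - set (v := f (ginv b) u). set (v' := f' (ginv b) u).
    assert (Ev : f b v = f b v').
    { rewrite (IHb v') by (apply Inf'; auto). unfold v, v'. rewrite <- Mf, <- Mf' by auto.
      rewrite mVl. rewrite F1, F1' by auto. reflexivity. }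
    apply (f_equal (f (ginv b))) in Ev. rewrite <- !Mf in Ev by (unfold v, v'; auto).
    rewrite mVr in Ev. rewrite !E1 in Ev by (unfold v, v'; auto). exact Ev.
Qed.

Lemma part2 (G3 : group) (G0 G1 G2 : G3 -> Prop) :
     NF_fin G0 G1 G2 -> forall a, (G1 a /\ G2 a) <-> G0 a.
Proof.
  intros HN a. pose proof HN as HN'.
  destruct HN as [S0 [S1 [S2 [_ [_ [_ [LF [I01 [I02 [Gen [Univ _]]]]]]]]]]].
  split; [|intros; auto].
  intros [A1 A2].
  destruct S0 as [Z0 [M0 V0]].
  destruct (coset_reps_exist (X := G3) (K := fun y => exists g0, G0 g0 /\ y = g0)) as [I [HI Ione]].
  - exists gone; auto.
  - intros p q [p' [Hp ->]] [q' [Hq ->]]. exists (p' ** q'); auto.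
  - intros p [p' [Hp ->]]. exists (ginv p'); auto.
  - set (x := @Try G3 G3 G3 (fun g => g) (fun g => g) I I).
    assert (Hx : is_try G0 G1 G2 x).
    { unfold is_try; simpl. repeat split; auto; intros p q _ _; auto. }
    destruct (Univ x Hx) as [f [_ [_ [F1 F2]]]].
    set (u := ((gone, gone, gone) : tU x)).
    assert (Hu : inU G0 x u) by (unfold inU; simpl; auto).
    assert (E : j1 G0 x a u = j2 G0 x a u).
    { transitivity (f a u); [symmetry; apply F1; auto | apply F2; auto]. }
    destruct (j1_spec (x := x) HI a Hu) as [_ [B0 [_ B4]]].
    destruct (j2_spec (x := x) HI a Hu) as [B5 _].
    rewrite <- E in B5. simpl in *. rewrite B5, m1l, m1l in B4. rewrite B4, m1l in B0. exact B0.
Qed.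
Section Act.
Variables (A B : group).
Definition step (G3 : group) (G0p : G3 -> Prop) (x : try G3)
  (e1 : A -> tX1 x) (e2 : B -> tX2 x) (u : tU x) (l : A + B) : tU x :=
  match l with inl g => j1 G0p x (e1 g) u | inr g => j2 G0p x (e2 g) u end.
Definition actG (G3 : group) (G0p : G3 -> Prop) (x : try G3)
  (e1 : A -> tX1 x) (e2 : B -> tX2 x) (w : list (A + B)) (u : tU x) : tU x :=
  fold_left (step G0p e1 e2) w u.

Lemma actG_app (G3 : group) (G0p : G3 -> Prop) (x : try G3) e1 e2 w w' u :
  @actG G3 G0p x e1 e2 (w ++ w') u = actG G0p e1 e2 w' (actG G0p e1 e2 w u).
Proof. unfold actG. apply fold_left_app. Qed.

Lemma actG_in (G3 : group) (G0p : G3 -> Prop) (x : try G3) e1 e2 :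
  coset_reps (K1 G0p x) (tI1 x) -> coset_reps (K2 G0p x) (tI2 x) ->
  forall w u, inU G0p x u -> inU G0p x (@actG G3 G0p x e1 e2 w u).
Proof.
  intros H1 H2 w. induction w as [|l w IH]; intros u Hu; simpl; auto.
  apply IH. destruct l; simpl; [apply j1_in|apply j2_in]; auto.
Qed.

Lemma actG_perm (G3 : group) (G0p : G3 -> Prop) (x : try G3) e1 e2 w :
  perm_gen G0p x (fun u => @actG G3 G0p x e1 e2 w u).
Proof.
  induction w as [|l w IH]; simpl.
  - apply pg_id.
  - destruct l as [g|g].
    + exact (pg_comp (pg_j1 _ (e1 g)) IH).
    + exact (pg_comp (pg_j2 _ (e2 g)) IH).
Qed.
End Act.

Fixpoint sublists {T : Type} (l : list T) : list (list T) :=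
  match l with
  | [] => [[]]
  | a :: l' => map (cons a) (sublists l') ++ sublists l'
  end.

Lemma filter_sublists {T : Type} (f : T -> bool) (l : list T) : In (filter f l) (sublists l).
Proof. induction l as [|a l IH]; simpl; auto.
  apply in_or_app. destruct (f a); [left; apply in_map; auto | right; auto]. Qed.

Fixpoint all_lists {B : Type} (n : nat) (L : list B) : list (list B) :=
  match n with
  | O => [[]]
  | S n' => flat_map (fun y => map (cons y) (all_lists n' L)) L
  end.

Lemma all_lists_in {B : Type} (L : list B) (s : list B) :
  (forall b, In b s -> In b L) -> In s (all_lists (length s) L).
Proof. induction s as [|a s IH]; intros H; simpl; auto.
  apply in_flat_map. exists a. split; [apply H; simpl; auto|].
  apply in_map. apply IH. intros; apply H; simpl; auto. Qed.

Lemma map_eq_in {A B : Type} (f g : A -> B) (l : list A) :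
  map f l = map g l -> forall a, In a l -> f a = g a.
Proof. induction l as [|b l IH]; simpl; intros E a Ha; [contradiction|].
  injection E as E1 E2. destruct Ha as [->|Ha]; auto. Qed.

Lemma finite_from_code (C B : Type) (c0 : C) (code : C -> list B) (L : list B) (n : nat) :
  (forall c, length (code c) = n) -> (forall c b, In b (code c) -> In b L) ->
  (forall c c', code c = code c' -> c = c') -> finite_set (fun _ : C => True).
Proof.
  intros Hn HL Hi. exists (map (fun s => epsilon (inhabits c0) (fun c => code c = s)) (all_lists n L)).
  intros c _. apply in_map_iff. exists (code c). split.
  - apply Hi. apply (epsilon_spec (inhabits c0) (fun c' => code c' = code c)). exists c; auto.
  - rewrite <- (Hn c). apply all_lists_in. apply HL.
Qed.
Lemma coset_reps_ext (X : group) (K K' I : X -> Prop) :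
  (forall y, K y <-> K' y) -> coset_reps K I -> coset_reps K' I.
Proof. intros E H. replace K' with K; auto.
  apply functional_extensionality; intros; apply propositional_extensionality; auto. Qed.

Section P3.
Variables G0 G1 G2 : group.
Variable i1 : G0 -> G1.
Variable i2 : G0 -> G2.
Hypothesis Hi1 : group_hom i1.
Hypothesis Ii1 : forall a b, i1 a = i1 b -> a = b.
Hypothesis Hi2 : group_hom i2.
Hypothesis Ii2 : forall a b, i2 a = i2 b -> a = b.

Definition W := list (G1 + G2).
Definition minT (J1 : G1 -> Prop) (J2 : G2 -> Prop) : try G0 := @Try G0 G1 G2 i1 i2 J1 J2.
Definition Gp0 : G0 -> Prop := fun _ => True.
Definition actm J1 J2 (w : W) (u : tU (minT J1 J2)) : tU (minT J1 J2) :=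
  actG Gp0 (x := minT J1 J2) (fun g => g) (fun g => g) w u.
Arguments actm J1 J2 w u : clear implicits.
Lemma actm_app J1 J2 a b u : actm J1 J2 (a ++ b) u = actm J1 J2 b (actm J1 J2 a u).
Proof. unfold actm. apply actG_app. Qed.
Definition validJ J1 J2 :=
  coset_reps (K1 Gp0 (minT J1 J2)) J1 /\ coset_reps (K2 Gp0 (minT J1 J2)) J2 /\ J1 gone /\ J2 gone.
Definition weq (w w' : W) : Prop := forall J1 J2, validJ J1 J2 ->
  forall u, inU Gp0 (minT J1 J2) u -> actm J1 J2 w u = actm J1 J2 w' u.

Lemma inj_i1 J1 J2 : inj_on Gp0 (te1 (minT J1 J2)).
Proof. intros a b _ _. apply Ii1. Qed.
Lemma inj_i2 J1 J2 : inj_on Gp0 (te2 (minT J1 J2)).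
Proof. intros a b _ _. apply Ii2. Qed.

Lemma actm_in J1 J2 : validJ J1 J2 -> forall w u, inU Gp0 (minT J1 J2) u ->
  inU Gp0 (minT J1 J2) (actm J1 J2 w u).
Proof. intros [H1 [H2 _]] w u Hu. apply actG_in; auto. Qed.

Lemma weq_refl w : weq w w. Proof. intros J1 J2 _ u _. reflexivity. Qed.
Lemma weq_sym w w' : weq w w' -> weq w' w.
Proof. intros H J1 J2 V u Hu. symmetry. apply H; auto. Qed.
Lemma weq_trans w w' w'' : weq w w' -> weq w' w'' -> weq w w''.
Proof. intros H H' J1 J2 V u Hu. rewrite (H J1 J2 V u Hu). apply H'; auto. Qed.
Lemma weq_app a a' b b' : weq a a' -> weq b b' -> weq (a ++ b) (a' ++ b').
Proof. intros Ha Hb J1 J2 V u Hu. rewrite !actm_app. rewrite (Ha J1 J2 V u Hu).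
  apply Hb; auto. apply actm_in; auto. Qed.

Definition linv (l : G1 + G2) : G1 + G2 :=
  match l with inl g => inl (ginv g) | inr g => inr (ginv g) end.
Definition winv (w : W) : W := rev (map linv w).

Lemma letter_inv J1 J2 l u : validJ J1 J2 -> inU Gp0 (minT J1 J2) u ->
  actm J1 J2 [linv l; l] u = u.
Proof.
  intros V Hu. destruct V as [C1 [C2 _]]. destruct l as [g|g]; unfold actm; simpl.
  - apply (j1_char C1 (@inj_i1 J1 J2)); auto.
    + apply j1_in; auto.
    + destruct (j1_spec C1 (ginv g) Hu) as [E _]. symmetry; exact E.
    + destruct (j1_spec C1 (ginv g) Hu) as [_ [_ [_ E]]]. simpl in *. rewrite E.
      rewrite <- mA, mVl, m1r. reflexivity.
  - apply (j2_char C2 (@inj_i2 J1 J2)); auto.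
    + apply j2_in; auto.
    + destruct (j2_spec C2 (ginv g) Hu) as [E _]. symmetry; exact E.
    + destruct (j2_spec C2 (ginv g) Hu) as [_ [_ [_ E]]]. simpl in *. rewrite E.
      rewrite <- mA, mVl, m1r. reflexivity.
Qed.

Lemma winv_weq w : weq (winv w ++ w) [].
Proof.
  induction w as [|l w IH]; intros J1 J2 V u Hu.
  - reflexivity.
  - unfold winv. simpl map. simpl rev. fold (winv w).
    replace ((winv w ++ [linv l]) ++ l :: w) with (winv w ++ [linv l; l] ++ w)
      by (rewrite <- app_assoc; reflexivity).
    rewrite !actm_app.
    rewrite letter_inv by (auto; apply actm_in; auto).
    rewrite <- actm_app. apply IH; auto.
Qed.

Definition HC := {P : W -> Prop | exists w, P = weq w}.
Definition Mk (w : W) : HC := exist _ (weq w) (ex_intro _ w eq_refl).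
Definition rep (P : HC) : W := proj1_sig (constructive_indefinite_description _ (proj2_sig P)).
Lemma rep_spec P : proj1_sig P = weq (rep P).
Proof. unfold rep. destruct (constructive_indefinite_description _ _). auto. Qed.
Lemma Mk_eq w w' : weq w w' -> Mk w = Mk w'.
Proof. intros H. unfold Mk.
  assert (E : weq w = weq w').
  { apply functional_extensionality; intro v; apply propositional_extensionality.
    split; intro; eauto using weq_trans, weq_sym. }
  revert H. generalize (ex_intro (fun w0 => weq w = weq w0) w eq_refl).
  rewrite E. intros e _. f_equal. apply proof_irrelevance. Qed.
Lemma Mk_inj w w' : Mk w = Mk w' -> weq w w'.
Proof. intros H. apply (f_equal (@proj1_sig _ _)) in H. simpl in H. rewrite H. apply weq_refl. Qed.
Lemma Mk_rep P : Mk (rep P) = P.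
Proof. pose proof (rep_spec P) as E. destruct P as [P0 HP]. simpl in E. unfold Mk.
  generalize (ex_intro (fun w0 => weq (rep (exist _ P0 HP)) = weq w0) (rep (exist _ P0 HP)) eq_refl).
  rewrite <- E. intros. f_equal. apply proof_irrelevance. Qed.
Lemma rep_Mk w : weq (rep (Mk w)) w.
Proof. apply Mk_inj. rewrite Mk_rep. reflexivity. Qed.

Definition hmul (P Q : HC) : HC := Mk (rep P ++ rep Q).
Definition hone : HC := Mk [].
Definition hinv (P : HC) : HC := Mk (winv (rep P)).
Lemma hmul_Mk a b : hmul (Mk a) (Mk b) = Mk (a ++ b).
Proof. apply Mk_eq. apply weq_app; apply rep_Mk. Qed.
Lemma hmulA P Q R : hmul P (hmul Q R) = hmul (hmul P Q) R.
Proof. rewrite <- (Mk_rep P), <- (Mk_rep Q), <- (Mk_rep R). rewrite !hmul_Mk, app_assoc. reflexivity. Qed.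
Lemma hmul1l P : hmul hone P = P.
Proof. rewrite <- (Mk_rep P). unfold hone. rewrite hmul_Mk. reflexivity. Qed.
Lemma hmulVl P : hmul (hinv P) P = hone.
Proof. rewrite <- (Mk_rep P) at 2. unfold hinv. rewrite hmul_Mk. apply Mk_eq. apply winv_weq. Qed.

Definition H3 : group := @Group HC hmul hone hinv hmulA hmul1l hmulVl.

Lemma i1_1 : i1 gone = gone. Proof. apply (hom1 (A := fun _ => True)); auto. apply ghom_on; auto. Qed.
Lemma i2_1 : i2 gone = gone. Proof. apply (hom1 (A := fun _ => True)); auto. apply ghom_on; auto. Qed.
Lemma i1_V p : i1 (ginv p) = ginv (i1 p).
Proof. apply (homV (A := fun _ => True)); auto. apply ghom_on; auto. Qed.
Lemma i2_V p : i2 (ginv p) = ginv (i2 p).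
Proof. apply (homV (A := fun _ => True)); auto. apply ghom_on; auto. Qed.

Lemma validJ_exists : exists J1 J2, validJ J1 J2.
Proof.
  destruct (coset_reps_exist (X := G1) (K := fun y => exists g0, Gp0 g0 /\ y = i1 g0)) as [J1 [C1 O1]].
  - exists gone. split; [exact I| symmetry; apply i1_1].
  - intros a b [p [_ ->]] [q [_ ->]]. exists (p ** q). split; [exact I| symmetry; apply Hi1].
  - intros a [p [_ ->]]. exists (ginv p). split; [exact I| symmetry; apply i1_V].
  - destruct (coset_reps_exist (X := G2) (K := fun y => exists g0, Gp0 g0 /\ y = i2 g0)) as [J2 [C2 O2]].
    + exists gone. split; [exact I| symmetry; apply i2_1].
    + intros a b [p [_ ->]] [q [_ ->]]. exists (p ** q). split; [exact I| symmetry; apply Hi2].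
    + intros a [p [_ ->]]. exists (ginv p). split; [exact I| symmetry; apply i2_V].
    + exists J1, J2. split; [exact C1|split; [exact C2| auto]].
Qed.

Definition f1 (g : G1) : H3 := Mk [inl g].
Definition f2 (g : G2) : H3 := Mk [inr g].
Definition f0 (g : G0) : H3 := f1 (i1 g).

Lemma f1_hom : group_hom f1.
Proof. intros g h. simpl. unfold f1. rewrite hmul_Mk. apply Mk_eq.
  intros J1 J2 [C1 [C2 _]] u Hu. unfold actm; simpl.
  apply (j1_char C1 (@inj_i1 J1 J2) Hu).
  - apply j1_in; auto. apply j1_in; auto.
  - destruct (j1_spec C1 h (j1_in C1 g Hu)) as [E _]. rewrite E.
    destruct (j1_spec C1 g Hu) as [E' _]. exact E'.
  - destruct (j1_spec C1 h (j1_in C1 g Hu)) as [_ [_ [_ E]]]. rewrite E.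
    destruct (j1_spec C1 g Hu) as [_ [_ [_ E']]]. rewrite E'. symmetry. apply mA.
Qed.

Lemma f2_hom : group_hom f2.
Proof. intros g h. simpl. unfold f2. rewrite hmul_Mk. apply Mk_eq.
  intros J1 J2 [C1 [C2 _]] u Hu. unfold actm; simpl.
  apply (j2_char C2 (@inj_i2 J1 J2) Hu).
  - apply j2_in; auto. apply j2_in; auto.
  - destruct (j2_spec C2 h (j2_in C2 g Hu)) as [E _]. rewrite E.
    destruct (j2_spec C2 g Hu) as [E' _]. exact E'.
  - destruct (j2_spec C2 h (j2_in C2 g Hu)) as [_ [_ [_ E]]]. rewrite E.
    destruct (j2_spec C2 g Hu) as [_ [_ [_ E']]]. rewrite E'. symmetry. apply mA.
Qed.

Lemma f1_inj g h : f1 g = f1 h -> g = h.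
Proof. intros E. apply Mk_inj in E. destruct validJ_exists as [J1 [J2 V]].
  pose proof V as [C1 [C2 [O1 O2]]].
  set (u := ((gone, gone, gone) : tU (minT J1 J2))).
  assert (Hu : inU Gp0 (minT J1 J2) u) by (unfold inU, u, Gp0; simpl; tauto).
  specialize (E J1 J2 V u Hu). unfold actm in E; simpl in E.
  destruct (j1_spec C1 g Hu) as [_ [_ [_ A]]]. destruct (j1_spec C1 h Hu) as [_ [_ [_ B]]].
  rewrite E in A. rewrite A in B. apply (canl B).
Qed.

Lemma f2_inj g h : f2 g = f2 h -> g = h.
Proof. intros E. apply Mk_inj in E. destruct validJ_exists as [J1 [J2 V]].
  pose proof V as [C1 [C2 [O1 O2]]].
  set (u := ((gone, gone, gone) : tU (minT J1 J2))).
  assert (Hu : inU Gp0 (minT J1 J2) u) by (unfold inU, u, Gp0; simpl; tauto).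
  specialize (E J1 J2 V u Hu). unfold actm in E; simpl in E.
  destruct (j2_spec C2 g Hu) as [_ [_ [_ A]]]. destruct (j2_spec C2 h Hu) as [_ [_ [_ B]]].
  rewrite E in A. rewrite A in B. apply (canl B).
Qed.

Lemma f12 g : f2 (i2 g) = f0 g.
Proof. unfold f0, f1, f2. apply Mk_eq. intros J1 J2 [C1 [C2 _]] u Hu.
  unfold actm; simpl.
  set (v := ((fst (fst u) ** g, snd (fst u), snd u) : tU (minT J1 J2))).
  assert (Hv : inU Gp0 (minT J1 J2) v) by (unfold inU in *; simpl in *; tauto).
  transitivity v.
  - apply (j2_char C2 (@inj_i2 J1 J2)); auto. simpl. rewrite Hi2. apply mA.
  - symmetry. apply (j1_char C1 (@inj_i1 J1 J2)); auto. simpl. rewrite Hi1. apply mA.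
Qed.

Definition H0p (h : H3) : Prop := exists g, f0 g = h.
Definition H1p (h : H3) : Prop := exists g, f1 g = h.
Definition H2p (h : H3) : Prop := exists g, f2 g = h.

Lemma gen_Mk w : generated (fun y => H1p y \/ H2p y) (Mk w).
Proof.
  induction w as [|l w IH].
  - exact (gen_one _).
  - replace (Mk (l :: w)) with (hmul (Mk [l]) (Mk w)) by (rewrite hmul_Mk; reflexivity).
    apply (gen_mul (G := H3)); auto. apply gen_base. destruct l as [g|g].
    + left. exists g. reflexivity.
    + right. exists g. reflexivity.
Qed.

Lemma H3_gen (a : H3) : generated (fun y => H1p y \/ H2p y) a.
Proof. rewrite <- (Mk_rep a). apply gen_Mk. Qed.

Variables (l0 : list G0) (l1 : list G1) (l2 : list G2).
Hypothesis L0 : forall g, In g l0.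
Hypothesis L1 : forall g, In g l1.
Hypothesis L2 : forall g, In g l2.

Definition decb {T : Type} (J : T -> Prop) (t : T) : bool :=
  if excluded_middle_informative (J t) then true else false.

Definition keys : list ((list G1 * list G2) * (G0 * G1 * G2)) :=
  list_prod (list_prod (sublists l1) (sublists l2)) (list_prod (list_prod l0 l1) l2).

Definition code (P : H3) : list (G0 * G1 * G2) :=
  map (fun k : (list G1 * list G2) * (G0 * G1 * G2) =>
    (actm (fun t => In t (fst (fst k))) (fun t => In t (snd (fst k))) (rep P) (snd k) : G0 * G1 * G2)) keys.

Lemma filter_pred {T : Type} (J : T -> Prop) (l : list T) : (forall t, In t l) ->
  J = (fun t => In t (filter (decb J) l)).
Proof. intros Hl. apply functional_extensionality; intro t. apply propositional_extensionality.
  rewrite filter_In. unfold decb. destruct excluded_middle_informative; intuition; discriminate. Qed.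

Lemma code_inj P Q : code P = code Q -> P = Q.
Proof.
  intros E. rewrite <- (Mk_rep P), <- (Mk_rep Q). apply Mk_eq.
  intros J1 J2 V u Hu.
  set (s1 := filter (decb J1) l1). set (s2 := filter (decb J2) l2).
  assert (Hk : In ((s1, s2), u) keys).
  { unfold keys. apply in_prod. apply in_prod; apply filter_sublists.
    destruct u as [[a b] c]. apply in_prod; auto. apply in_prod; auto. }
  assert (E1 : J1 = fun t => In t s1) by (apply filter_pred; auto).
  assert (E2 : J2 = fun t => In t s2) by (apply filter_pred; auto).
  clearbody s1 s2. subst J1 J2.
  exact (map_eq_in E Hk).
Qed.

Lemma H3_finite : finite_set (fun _ : H3 => True).
Proof.
  apply (@finite_from_code H3 (G0 * G1 * G2) hone code (list_prod (list_prod l0 l1) l2) (length keys)).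
  - intros c. unfold code. apply length_map.
  - intros c b _. destruct b as [[a b] c']. apply in_prod; auto. apply in_prod; auto.
  - apply code_inj.
Qed.

Section Transfer.
Variable x : try H3.
Hypothesis Hx : is_try H0p H1p H2p x.
Definition e1 (g : G1) : tX1 x := te1 x (f1 g).
Definition e2 (g : G2) : tX2 x := te2 x (f2 g).

Lemma Hh1 : hom_on H1p (te1 x). Proof. apply Hx. Qed.
Lemma Hj1 : inj_on H1p (te1 x). Proof. apply Hx. Qed.
Lemma Hh2 : hom_on H2p (te2 x). Proof. apply Hx. Qed.
Lemma Hj2 : inj_on H2p (te2 x). Proof. apply Hx. Qed.
Lemma XC1 : coset_reps (K1 H0p x) (tI1 x). Proof. apply Hx. Qed.
Lemma XC2 : coset_reps (K2 H0p x) (tI2 x). Proof. apply Hx. Qed.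
Lemma XO1 : tI1 x gone. Proof. apply Hx. Qed.
Lemma XO2 : tI2 x gone. Proof. apply Hx. Qed.

Lemma XI1 : inj_on H0p (te1 x).
Proof. intros a b [p <-] [q <-] E. apply Hj1 in E; [exact E| exists (i1 p); auto| exists (i1 q); auto]. Qed.
Lemma XI2 : inj_on H0p (te2 x).
Proof. intros a b [p <-] [q <-] E. apply Hj2 in E.
  - exact E.
  - exists (i2 p). apply f12.
  - exists (i2 q). apply f12. Qed.

Lemma e1_hom g h : e1 (g ** h) = e1 g ** e1 h.
Proof. unfold e1. rewrite (f1_hom g h). apply Hh1; [exists g|exists h]; auto. Qed.
Lemma e2_hom g h : e2 (g ** h) = e2 g ** e2 h.
Proof. unfold e2. rewrite (f2_hom g h). apply Hh2; [exists g|exists h]; auto. Qed.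
Lemma e1_inj g h : e1 g = e1 h -> g = h.
Proof. intros E. apply f1_inj. apply Hj1 in E; auto; [exists g|exists h]; auto. Qed.
Lemma e2_inj g h : e2 g = e2 h -> g = h.
Proof. intros E. apply f2_inj. apply Hj2 in E; auto; [exists g|exists h]; auto. Qed.
Lemma e1_V g : e1 (ginv g) = ginv (e1 g).
Proof. apply (homV (A := fun _ => True)); auto. intros a b _ _; apply e1_hom. Qed.
Lemma e2_V g : e2 (ginv g) = ginv (e2 g).
Proof. apply (homV (A := fun _ => True)); auto. intros a b _ _; apply e2_hom. Qed.
Lemma e1_1 : e1 gone = gone.
Proof. apply (hom1 (A := fun _ => True)); auto. intros a b _ _; apply e1_hom. Qed.
Lemma e2_1 : e2 gone = gone.
Proof. apply (hom1 (A := fun _ => True)); auto. intros a b _ _; apply e2_hom. Qed.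
Lemma te2_f0 p : te2 x (f0 p) = e2 (i2 p).
Proof. unfold e2. rewrite f12. reflexivity. Qed.

Section A.
Variables (a1 : tX1 x) (a2 : tX2 x).
Hypothesis Ha1 : tI1 x a1.
Hypothesis Ha2 : tI2 x a2.
Definition J1' (t : G1) : Prop := tI1 x (a1 ** e1 t).
Definition J2' (t : G2) : Prop := tI2 x (a2 ** e2 t).

Lemma valid' : validJ J1' J2'.
Proof.
  split; [|split; [|split]].
  - intros y. destruct (XC1 (a1 ** e1 y)) as [i [[Ii [k [[g0 [[p Hp] ->]] Hy]]] Hu]].
    subst g0. change (te1 x (f0 p)) with (e1 (i1 p)) in Hy.
    set (t := y ** ginv (i1 p)).
    assert (Et : a1 ** e1 t = i).
    { unfold t. rewrite e1_hom, e1_V, mA, Hy, <- mA, mVr, m1r. reflexivity. }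
    exists t. split; [split|].
    + unfold J1'. rewrite Et. exact Ii.
    + exists (i1 p). split; [exists p; split; [exact I|reflexivity]|].
      unfold t. rewrite <- mA, mVl, m1r. reflexivity.
    + intros t' Jt' [k' [[p' [_ ->]] Ey]].
      assert (E' : a1 ** e1 t' = i).
      { apply Hu; [exact Jt'|]. exists (te1 x (f0 p')). split.
        - exists (f0 p'). split; [exists p'; reflexivity|reflexivity].
        - change (te1 x (f0 p')) with (e1 (i1 p')). rewrite Ey. simpl. rewrite e1_hom, mA. reflexivity. }
      apply e1_inj. apply (@canl _ a1). rewrite E', Et. reflexivity.
  - intros y. destruct (XC2 (a2 ** e2 y)) as [i [[Ii [k [[g0 [[p Hp] ->]] Hy]]] Hu]].
    subst g0. rewrite te2_f0 in Hy.
    set (t := y ** ginv (i2 p)).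
    assert (Et : a2 ** e2 t = i).
    { unfold t. rewrite e2_hom, e2_V, mA, Hy, <- mA, mVr, m1r. reflexivity. }
    exists t. split; [split|].
    + unfold J2'. rewrite Et. exact Ii.
    + exists (i2 p). split; [exists p; split; [exact I|reflexivity]|].
      unfold t. rewrite <- mA, mVl, m1r. reflexivity.
    + intros t' Jt' [k' [[p' [_ ->]] Ey]].
      assert (E' : a2 ** e2 t' = i).
      { apply Hu; [exact Jt'|]. exists (te2 x (f0 p')). split.
        - exists (f0 p'). split; [exists p'; reflexivity|reflexivity].
        - rewrite te2_f0. rewrite Ey. simpl. rewrite e2_hom, mA. reflexivity. }
      apply e2_inj. apply (@canl _ a2). rewrite E', Et. reflexivity.
  - unfold J1'. rewrite e1_1, m1r. exact Ha1.
  - unfold J2'. rewrite e2_1, m1r. exact Ha2.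
Qed.

Definition Sx (v : tU x) : Prop := inU H0p x v /\ (exists t1, snd (fst v) = a1 ** e1 t1) /\
  (exists t2, snd v = a2 ** e2 t2).
Definition ps0 (h : H3) : G0 := epsilon (inhabits gone) (fun p : G0 => f0 p = h).
Definition ps1 (b : tX1 x) : G1 := epsilon (inhabits gone) (fun t : G1 => b = a1 ** e1 t).
Definition ps2 (b : tX2 x) : G2 := epsilon (inhabits gone) (fun t : G2 => b = a2 ** e2 t).
Definition phi (v : tU x) : tU (minT J1' J2') := (ps0 (fst (fst v)), ps1 (snd (fst v)), ps2 (snd v)).

Lemma ps0_spec h : H0p h -> f0 (ps0 h) = h.
Proof. intros H. unfold ps0. apply (epsilon_spec (inhabits gone) (fun p : G0 => f0 p = h)). exact H. Qed.
Lemma ps1_spec b : (exists t, b = a1 ** e1 t) -> b = a1 ** e1 (ps1 b).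
Proof. intros H. unfold ps1. apply (epsilon_spec (inhabits gone) (fun t : G1 => b = a1 ** e1 t)). exact H. Qed.
Lemma ps2_spec b : (exists t, b = a2 ** e2 t) -> b = a2 ** e2 (ps2 b).
Proof. intros H. unfold ps2. apply (epsilon_spec (inhabits gone) (fun t : G2 => b = a2 ** e2 t)). exact H. Qed.

Lemma phi_in v : Sx v -> inU Gp0 (minT J1' J2') (phi v).
Proof. intros [[V0 [V1 V2]] [T1 T2]]. split; [exact I|split].
  - simpl. unfold J1'. rewrite <- ps1_spec; auto.
  - simpl. unfold J2'. rewrite <- ps2_spec; auto.
Qed.

Lemma phi_inj v v' : Sx v -> Sx v' -> phi v = phi v' -> v = v'.
Proof. intros [[V0 [V1 V2]] [T1 T2]] [[V0' [V1' V2']] [T1' T2']] E.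
  unfold phi in E. injection E as E0 E1 E2.
  destruct v as [[v0 v1] v2], v' as [[v0' v1'] v2']. simpl in *.
  rewrite <- (ps0_spec V0), <- (ps0_spec V0'), (ps1_spec T1), (ps1_spec T1'),
    (ps2_spec T2), (ps2_spec T2'), E0, E1, E2. reflexivity.
Qed.

Lemma step1 g v : Sx v -> Sx (j1 H0p x (e1 g) v) /\
  phi (j1 H0p x (e1 g) v) = j1 Gp0 (minT J1' J2') g (phi v).
Proof.
  intros Sv. pose proof Sv as [Vin [T1 T2]].
  pose proof (j1_in XC1 (e1 g) Vin) as Win.
  destruct (j1_spec XC1 (e1 g) Vin) as [W2 [W0 [W1 W4]]].
  set (w := j1 H0p x (e1 g) v) in *. clearbody w.
  pose proof (ps0_spec (proj1 Vin)) as Hp. pose proof (ps1_spec T1) as Ht1.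
  pose proof (ps0_spec W0) as Hq.
  set (p := ps0 (fst (fst v))) in *. set (t1 := ps1 (snd (fst v))) in *.
  set (q := ps0 (fst (fst w))) in *.
  assert (Ew : snd (fst w) ** e1 (i1 q) = a1 ** e1 (t1 ** i1 p ** g)).
  { change (e1 (i1 q)) with (te1 x (f0 q)). rewrite Hq, W4.
    rewrite <- Hp. change (te1 x (f0 p)) with (e1 (i1 p)).
    rewrite Ht1 at 1. rewrite !e1_hom, !mA. reflexivity. }
  assert (Sw : Sx w).
  { split; [exact Win|split].
    - exists (t1 ** i1 p ** g ** ginv (i1 q)). apply solve_l in Ew. rewrite Ew.
      rewrite (e1_hom (t1 ** i1 p ** g) (ginv (i1 q))), e1_V, mA. reflexivity.
    - rewrite W2. exact T2. }
  split; [exact Sw|].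
  symmetry. apply (j1_char (proj1 valid') (@inj_i1 J1' J2')).
  all: try (apply phi_in; assumption).
  - unfold phi. simpl. f_equal. exact W2.
  - unfold phi. simpl. apply e1_inj. apply (@canl _ a1).
    change (a1 ** e1 (ps1 (snd (fst w)) ** i1 q) = a1 ** e1 (t1 ** i1 p ** g)).
    rewrite <- Ew. rewrite e1_hom, mA. f_equal. symmetry. apply ps1_spec. exact (proj1 (proj2 Sw)).
Qed.

Lemma step2 g v : Sx v -> Sx (j2 H0p x (e2 g) v) /\
  phi (j2 H0p x (e2 g) v) = j2 Gp0 (minT J1' J2') g (phi v).
Proof.
  intros Sv. pose proof Sv as [Vin [T1 T2]].
  pose proof (j2_in XC2 (e2 g) Vin) as Win.
  destruct (j2_spec XC2 (e2 g) Vin) as [W1 [W0 [W2 W4]]].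
  set (w := j2 H0p x (e2 g) v) in *. clearbody w.
  pose proof (ps0_spec (proj1 Vin)) as Hp. pose proof (ps2_spec T2) as Ht2.
  pose proof (ps0_spec W0) as Hq.
  set (p := ps0 (fst (fst v))) in *. set (t2 := ps2 (snd v)) in *.
  set (q := ps0 (fst (fst w))) in *.
  assert (Ew : snd w ** e2 (i2 q) = a2 ** e2 (t2 ** i2 p ** g)).
  { rewrite <- te2_f0, Hq, W4.
    rewrite <- Hp, te2_f0.
    rewrite Ht2 at 1. rewrite !e2_hom, !mA. reflexivity. }
  assert (Sw : Sx w).
  { split; [exact Win|split].
    - rewrite W1. exact T1.
    - exists (t2 ** i2 p ** g ** ginv (i2 q)). apply solve_l in Ew. rewrite Ew.
      rewrite (e2_hom (t2 ** i2 p ** g) (ginv (i2 q))), e2_V, mA. reflexivity. }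
  split; [exact Sw|].
  symmetry. apply (j2_char (proj1 (proj2 valid')) (@inj_i2 J1' J2')).
  all: try (apply phi_in; assumption).
  - unfold phi. simpl. f_equal. exact W1.
  - unfold phi. simpl. apply e2_inj. apply (@canl _ a2).
    change (a2 ** e2 (ps2 (snd w) ** i2 q) = a2 ** e2 (t2 ** i2 p ** g)).
    rewrite <- Ew. rewrite e2_hom, mA. f_equal. symmetry. apply ps2_spec. exact (proj2 (proj2 Sw)).
Qed.

Lemma trans_act w v : Sx v -> Sx (actG H0p e1 e2 w v) /\
  phi (actG H0p e1 e2 w v) = actm J1' J2' w (phi v).
Proof.
  revert v. induction w as [|l w IH]; intros v Sv.
  - split; auto.
  - destruct l as [g|g].
    + destruct (step1 g Sv) as [S' E']. destruct (IH _ S') as [S'' E''].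
      split; [exact S''|].
      transitivity (actm J1' J2' w (j1 Gp0 (minT J1' J2') g (phi v))); [|reflexivity].
      rewrite <- E'. exact E''.
    + destruct (step2 g Sv) as [S' E']. destruct (IH _ S') as [S'' E''].
      split; [exact S''|].
      transitivity (actm J1' J2' w (j2 Gp0 (minT J1' J2') g (phi v))); [|reflexivity].
      rewrite <- E'. exact E''.
Qed.
End A.

Lemma transfer w w' u : weq w w' -> inU H0p x u ->
  actG H0p e1 e2 w u = actG H0p e1 e2 w' u.
Proof.
  intros Hw Hu. pose proof Hu as [U0 [U1 U2]].
  assert (Su : Sx (snd (fst u)) (snd u) u).
  { split; [exact Hu|split].
    - exists gone. rewrite e1_1, m1r. reflexivity.
    - exists gone. rewrite e2_1, m1r. reflexivity. }
  destruct (trans_act U1 U2 w Su) as [S1' E1']. destruct (trans_act U1 U2 w' Su) as [S2' E2'].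
  apply (phi_inj S1' S2'). rewrite E1', E2'. apply Hw.
  - apply valid'; auto.
  - apply phi_in; auto.
Qed.
End Transfer.

Definition ff (x : try H3) (a : H3) (u : tU x) : tU x := actG H0p (e1 x) (e2 x) (rep a) u.
Arguments ff x a u : clear implicits.

Lemma ff_amalg (x : try H3) : is_try H0p H1p H2p x -> amalg_hom H0p H1p H2p x (ff x).
Proof.
  intros Hx. split; [|split; [|split]].
  - intros a. apply actG_perm.
  - intros a b u Hu. unfold ff. rewrite <- actG_app. apply (transfer Hx); auto.
    simpl. unfold hmul. apply rep_Mk.
  - intros a u [g <-] Hu. unfold ff. transitivity (actG H0p (e1 x) (e2 x) [inl g] u).
    + apply (transfer Hx); auto. apply rep_Mk.
    + reflexivity.
  - intros a u [g <-] Hu. unfold ff. transitivity (actG H0p (e1 x) (e2 x) [inr g] u).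
    + apply (transfer Hx); auto. apply rep_Mk.
    + reflexivity.
Qed.

Definition g1inv (h : H3) : G1 := epsilon (inhabits gone) (fun g => f1 g = h).
Definition g2inv (h : H3) : G2 := epsilon (inhabits gone) (fun g => f2 g = h).
Lemma g1inv_f1 g : g1inv (f1 g) = g.
Proof. apply f1_inj. unfold g1inv. apply (epsilon_spec (inhabits gone) (fun g' => f1 g' = f1 g)). exists g; auto. Qed.
Lemma g2inv_f2 g : g2inv (f2 g) = g.
Proof. apply f2_inj. unfold g2inv. apply (epsilon_spec (inhabits gone) (fun g' => f2 g' = f2 g)). exists g; auto. Qed.

Lemma separation (a : H3) : a <> gone ->
  exists x : try H3, is_try H0p H1p H2p x /\
    exists f, amalg_hom H0p H1p H2p x f /\ exists u, inU H0p x u /\ f a u <> u.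
Proof.
  intros Ha.
  assert (Nw : ~ weq (rep a) []).
  { intros Hw. apply Ha. rewrite <- (Mk_rep a). apply Mk_eq. exact Hw. }
  assert (Ex : exists J1 J2, validJ J1 J2 /\ exists u, inU Gp0 (minT J1 J2) u /\ actm J1 J2 (rep a) u <> u).
  { apply NNPP. intros N. apply Nw. intros J1 J2 V u Hu. apply NNPP. intros N'.
    apply N. exists J1, J2. split; auto. exists u. split; auto. }
  destruct Ex as [J1 [J2 [V [u [Hu Hne]]]]].
  pose proof V as [C1 [C2 [O1 O2]]].
  set (x := @Try H3 G1 G2 g1inv g2inv J1 J2).
  assert (Hx : is_try H0p H1p H2p x).
  { split; [|split; [|split; [|split; [|split; [|split; [|split; [|split; [|split]]]]]]]].
    - intros l. exists l1. intros; auto.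
    - intros l. exists l2. intros; auto.
    - intros h h' [g <-] [g' <-]. rewrite <- (f1_hom g g'). rewrite !g1inv_f1. reflexivity.
    - intros h h' [g <-] [g' <-]. simpl. rewrite !g1inv_f1. intros ->. reflexivity.
    - intros h h' [g <-] [g' <-]. rewrite <- (f2_hom g g'). rewrite !g2inv_f2. reflexivity.
    - intros h h' [g <-] [g' <-]. simpl. rewrite !g2inv_f2. intros ->. reflexivity.
    - apply (coset_reps_ext (K := K1 Gp0 (minT J1 J2))); auto.
      intros y. split.
      + intros [p [_ ->]]. exists (f0 p). split; [exists p; auto|]. simpl. unfold f0. rewrite g1inv_f1. reflexivity.
      + intros [g0 [[p <-] ->]]. exists p. split; [exact I|]. simpl. unfold f0. rewrite g1inv_f1. reflexivity.
    - apply (coset_reps_ext (K := K2 Gp0 (minT J1 J2))); auto.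
      intros y. split.
      + intros [p [_ ->]]. exists (f0 p). split; [exists p; auto|]. simpl. rewrite <- f12, g2inv_f2. reflexivity.
      + intros [g0 [[p <-] ->]]. exists p. split; [exact I|]. simpl. rewrite <- f12, g2inv_f2. reflexivity.
    - exact O1.
    - exact O2. }
  exists x. split; [exact Hx|]. exists (ff x). split; [apply ff_amalg; exact Hx|].
  destruct u as [[p t1] t2].
  set (u' := ((f0 p, t1, t2) : tU x)).
  assert (Hu' : inU H0p x u').
  { destruct Hu as [_ [U1 U2]]. split; [exists p; reflexivity| split; assumption]. }
  exists u'. split; [exact Hu'|]. intros E. apply Hne.
  assert (Su : @Sx x gone gone u').
  { split; [exact Hu'|split].
    - exists t1. simpl. unfold e1. simpl. rewrite g1inv_f1, m1l. reflexivity.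
    - exists t2. simpl. unfold e2. simpl. rewrite g2inv_f2, m1l. reflexivity. }
  destruct (trans_act (x := x) Hx O1 O2 (rep a) Su) as [_ Ep].
  unfold ff in E. rewrite E in Ep.
  assert (Phi : @phi x gone gone u' = (p, t1, t2)).
  { unfold phi. simpl. f_equal; [f_equal|].
    - pose proof (ps0_spec (ex_intro (fun q => f0 q = f0 p) p eq_refl)) as Q.
      apply f1_inj, Ii1 in Q. exact Q.
    - assert (Q : exists t, t1 = gone ** @e1 x t).
      { exists t1. unfold e1. simpl. rewrite g1inv_f1, m1l. reflexivity. }
      apply (ps1_spec (x := x)) in Q. unfold e1 in Q. simpl in Q. rewrite g1inv_f1, m1l in Q.
      symmetry. exact Q.
    - assert (Q : exists t, t2 = gone ** @e2 x t).
      { exists t2. unfold e2. simpl. rewrite g2inv_f2, m1l. reflexivity. }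
      apply (ps2_spec (x := x)) in Q. unfold e2 in Q. simpl in Q. rewrite g2inv_f2, m1l in Q.
      symmetry. exact Q. }
  assert (EJ1 : @J1' x gone = J1).
  { apply functional_extensionality; intro t. unfold J1', e1. simpl. rewrite g1inv_f1, m1l. reflexivity. }
  assert (EJ2 : @J2' x gone = J2).
  { apply functional_extensionality; intro t. unfold J2', e2. simpl. rewrite g2inv_f2, m1l. reflexivity. }
  match type of Ep with ?L = actm ?A ?B _ ?L =>
    assert (Phi' : L = (p, t1, t2)) by exact Phi;
    assert (EA : A = J1) by exact EJ1; assert (EB : B = J2) by exact EJ2 end.
  rewrite Phi' in Ep. clear Phi'. revert Ep. rewrite EA, EB. intros Ep. symmetry. exact Ep.
Qed.

Lemma f0_hom : group_hom f0.
Proof. intros g h. unfold f0. rewrite Hi1. apply f1_hom. Qed.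
Lemma f0_inj g h : f0 g = f0 h -> g = h.
Proof. intros E. apply f1_inj, Ii1 in E. exact E. Qed.

Lemma img_subgroup (G H : group) (f : G -> H) : group_hom f -> is_subgroup (fun h => exists g, f g = h).
Proof. intros Hf. split; [|split].
  - exists gone. apply (hom1 (A := fun _ => True)); auto. apply ghom_on; auto.
  - intros a b [g <-] [h <-]. exists (g ** h). apply Hf.
  - intros a [g <-]. exists (ginv g). apply (homV (A := fun _ => True)); auto. apply ghom_on; auto.
Qed.

Lemma img_finite (G H : group) (f : G -> H) (l : list G) : (forall g, In g l) ->
  finite_set (fun h => exists g, f g = h).
Proof. intros Hl. exists (map f l). intros h [g <-]. apply in_map. auto. Qed.

Lemma iso_f (G : group) (f : G -> H3) : group_hom f -> (forall a b, f a = f b -> a = b) ->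
  iso_onto f (fun h => exists g, f g = h).
Proof. intros Hf Hi. split; [exact Hf|split; [exact Hi|split]].
  - intros g. exists g. reflexivity.
  - intros h [g <-]. exists g. reflexivity. Qed.

Lemma part3_sec : exists (H : group) (H0 H1 H2 : H -> Prop)
            (g0 : G0 -> H) (g1 : G1 -> H) (g2 : G2 -> H),
       NF_fin H0 H1 H2 /\
       iso_onto g0 H0 /\ iso_onto g1 H1 /\ iso_onto g2 H2 /\
       (forall g, g1 (i1 g) = g0 g) /\ (forall g, g2 (i2 g) = g0 g).
Proof.
  exists H3, H0p, H1p, H2p, f0, f1, f2.
  split; [|split; [apply iso_f; [apply f0_hom|apply f0_inj]|
           split; [apply iso_f; [apply f1_hom|apply f1_inj]|
           split; [apply iso_f; [apply f2_hom|apply f2_inj]|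
           split; [intros; reflexivity| intros; apply f12]]]]].
  split; [apply img_subgroup, f0_hom|].
  split; [apply img_subgroup, f1_hom|].
  split; [apply img_subgroup, f2_hom|].
  split; [apply (img_finite f0 L0)|].
  split; [apply (img_finite f1 L1)|].
  split; [apply (img_finite f2 L2)|].
  split; [intros l; destruct H3_finite as [L HL]; exists L; intros; apply HL; auto|].
  split; [intros a [p <-]; exists (i1 p); reflexivity|].
  split; [intros a [p <-]; exists (i2 p); apply f12|].
  split; [apply H3_gen|].
  split; [intros x Hx; exists (ff x); apply ff_amalg; exact Hx|].
  apply separation.
Qed.
End P3.

Theorem claim2p8 :
  (* (1) uniqueness of f *)
  (forall (G3 : group) (G0 G1 G2 : G3 -> Prop),
     NF_fin G0 G1 G2 ->
     forall x : try G3, is_try G0 G1 G2 x ->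
     forall f f' : G3 -> tU x -> tU x,
       amalg_hom G0 G1 G2 x f -> amalg_hom G0 G1 G2 x f' ->
       forall a u, inU G0 x u -> f a u = f' a u) /\
  (* (2) G1 ∩ G2 = G0 *)
  (forall (G3 : group) (G0 G1 G2 : G3 -> Prop),
     NF_fin G0 G1 G2 -> forall a, (G1 a /\ G2 a) <-> G0 a) /\
  (* (3) existence of an NF_fin copy *)
  (forall (G0 G1 G2 : group) (i1 : G0 -> G1) (i2 : G0 -> G2),
     finite_group G0 -> finite_group G1 -> finite_group G2 ->
     group_hom i1 -> (forall a b, i1 a = i1 b -> a = b) ->
     group_hom i2 -> (forall a b, i2 a = i2 b -> a = b) ->
     exists (H3 : group) (H0 H1 H2 : H3 -> Prop)
            (f0 : G0 -> H3) (f1 : G1 -> H3) (f2 : G2 -> H3),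
       NF_fin H0 H1 H2 /\
       iso_onto f0 H0 /\ iso_onto f1 H1 /\ iso_onto f2 H2 /\
       (forall g, f1 (i1 g) = f0 g) /\ (forall g, f2 (i2 g) = f0 g)).
Proof.
  split; [exact part1|split; [exact part2|]].
  intros G0 G1 G2 i1 i2 [l0 F0] [l1 F1] [l2 F2] Hi1 Ii1 Hi2 Ii2.
  apply (@part3_sec G0 G1 G2 i1 i2 Hi1 Ii1 Hi2 Ii2 l0 l1 l2); intros; auto.
Qed.
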